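(* Let $$L=\widehat{\operatorname{Sym}_L}+a_{20}D_x^2+a_{11}D_xD_y+a_{02}D_y^2+a_{10}D_x+a_{01}D_y+a_{00},$$ with all $a_{ij}\in K$. (1) If $\operatorname{Sym}_L=XY(X+Y)$, so $\widehat{\operatorname{Sym}_L}=D_x^2D_y+D_xD_y^2$, then $$\Big(a_{02}^2-a_{11}a_{02}+a_{01}+\partial_x(a_{02}-a_{11})\Big)D_y+a_{00}-a_{02}a_{10}+a_{02}^2a_{20}+2a_{02}\partial_x(a_{20})-\partial_x(a_{10})+a_{20}\partial_x(a_{02})+\partial_x^2(a_{20})$$ is a common obstacle to factorization of $L$ of type $(X)(YX+YY)$. (2) If $\operatorname{Sym}_L=X^2Y$, so $\widehat{\operatorname{Sym}_L}=D_x^2D_y$, then $$\Big(a_{10}-a_{20}a_{11}-\partial_y(a_{11})\Big)D_x+a_{00}-a_{20}a_{01}+a_{20}^2a_{02}+2a_{20}\partial_y(a_{02})-\partial_y(a_{01})+a_{02}\partial_y(a_{20})+\partial_y^2(a_{02})$$ is a common obstacle to factorization of $L$ of type $(Y)(XX)$.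
   Context: $K$ is a field with two commuting derivations $\partial_x,\partial_y$, and $K[D_x,D_y]$ is the ring of linear differential operators over $K$: $D_xD_y=D_yD_x$, $D_x\circ f=fD_x+\partial_x(f)$ and $D_y\circ f=fD_y+\partial_y(f)$ for $f\in K$. For an operator $M=\sum m_{ij}D_x^iD_y^j$, $\operatorname{ord}(M)$ is the largest $i+j$ with $m_{ij}\ne0$ ($\operatorname{ord}(0)=-\infty$), and the symbol is $\operatorname{Sym}_M=\sum_{i+j=\operatorname{ord}M}m_{ij}X^iY^j$. For a homogeneous polynomial $S=\sum s_{ij}X^iY^j$, $\widehat S=\sum s_{ij}D_x^iD_y^j$. A factorization of type $(S_1)(S_2)$ of $M$ is $M=F_1\circ F_2$ with $\operatorname{Sym}_{F_i}=S_i$. A common obstacle to factorization of $L$ of type $(S_1)(S_2)$ is an operator $R$ such that $L-R$ has a factorization of that type and $R$ has minimal possible order among such operators. *)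

(* Defs.v *)
From HB Require Import structures.
From mathcomp Require Import all_boot all_order all_algebra.
Set Implicit Arguments. Unset Strict Implicit. Unset Printing Implicit Defensive.
Import Order.TTheory GRing.Theory Num.Theory.
Local Open Scope ring_scope.

Definition is_derivation (K : fieldType) (d : K -> K) : Prop :=
  (forall a b, d (a + b) = d a + d b) /\ (forall a b, d (a * b) = d a * b + a * d b).

(* Linear differential operators M = sum_{i,j} m_ij D_x^i D_y^j over K are
   represented in normal form (coefficients on the left) by M : {poly {poly K}},
   with  m_ij = (M`_i)`_j  (outer index = power of D_x, inner = power of D_y).
   Homogeneous polynomials S = sum s_ij X^i Y^j in K[X,Y] use the same
   representation, so \hat S is literally the same data. *)
Definition op (K : fieldType) := {poly {poly K}}.

Definition opcoef (K : fieldType) (M : op K) (i j : nat) : K := (M`_i)`_j.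

Definition mono (K : fieldType) (c : K) (i j : nat) : op K := (c *: 'X^j)%:P * 'X^i.

(* Composition of operators, using
   (a D_x^i D_y^j) o (b D_x^p D_y^q)
     = sum_{k<=i, l<=j} C(i,k) C(j,l) a dx^(i-k) dy^(j-l)(b) D_x^(k+p) D_y^(l+q). *)
Definition opmul (K : fieldType) (dx dy : K -> K) (M N : op K) : op K :=
  \sum_(i < size M) \sum_(j < size M`_i) \sum_(p < size N) \sum_(q < size N`_p)
   \sum_(k < i.+1) \sum_(l < j.+1)
     mono (opcoef M i j * 'C(i, k)%:R * 'C(j, l)%:R
             * iter (i - k) dx (iter (j - l) dy (opcoef N p q)))
          (k + p) (l + q).

(* i+j maximal over nonzero coefficients (0 for the zero operator) *)
Definition ordn (K : fieldType) (M : op K) : nat :=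
  \max_(i < size M) \max_(j < size (M`_i)%R | opcoef M i j != 0%R) (i + j)%N.

(* ord M : None stands for -infinity (M = 0), Some n for order n *)
Definition ord (K : fieldType) (M : op K) : option nat :=
  if M == 0 then None else Some (ordn M).

Definition ord_le (a b : option nat) : bool :=
  match a, b with
  | None, _ => true
  | Some _, None => false
  | Some m, Some n => (m <= n)%N
  end.

Definition Sym (K : fieldType) (M : op K) : op K :=
  \sum_(i < size M) \sum_(j < size M`_i | (i + j == ordn M)%N) mono (opcoef M i j) i j.

Definition hat (K : fieldType) (S : op K) : op K := S.

Definition has_fact_type (K : fieldType) (dx dy : K -> K) (S1 S2 M : op K) : Prop :=
  exists F1 F2 : op K, M = opmul dx dy F1 F2 /\ Sym F1 = S1 /\ Sym F2 = S2.

Definition common_obstacle (K : fieldType) (dx dy : K -> K) (S1 S2 L R : op K) : Prop :=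
  has_fact_type dx dy S1 S2 (L - R) /\
  forall R' : op K, has_fact_type dx dy S1 S2 (L - R') -> ord_le (ord R) (ord R').

Definition pX (K : fieldType) : op K := mono 1 1 0.
Definition pY (K : fieldType) : op K := mono 1 0 1.

(* Main.v *)
Require Import Defs.
From HB Require Import structures.
From mathcomp Require Import all_boot all_order all_algebra.
From mathcomp Require Import ring zify.
Import GRing.Theory.
Local Open Scope ring_scope.

Section Gen.
Variable K : fieldType.
Implicit Types (M N : op K) (a b c : K).

Lemma op_eq M N : (forall u v, opcoef M u v = opcoef N u v) -> M = N.
Proof. move=> H; apply/polyP => u; apply/polyP => v; exact: H. Qed.

Lemma opcoefD M N u v : opcoef (M + N) u v = opcoef M u v + opcoef N u v.
Proof. by rewrite /opcoef !coefD. Qed.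
Lemma opcoefN M u v : opcoef (- M) u v = - opcoef M u v.
Proof. by rewrite /opcoef !coefN. Qed.
Lemma opcoef0 u v : opcoef (0 : op K) u v = 0.
Proof. by rewrite /opcoef !coef0. Qed.
Lemma opcoef_sum I (r : seq I) (P : pred I) (F : I -> op K) u v :
  opcoef (\sum_(i <- r | P i) F i) u v = \sum_(i <- r | P i) opcoef (F i) u v.
Proof. by rewrite /opcoef !coef_sum. Qed.

Lemma opcoef_mono a i j u v :
  opcoef (mono a i j) u v = if (u == i) && (v == j) then a else 0.
Proof.
rewrite /opcoef /mono coefMXn.
have [->|ne] := eqVneq u i.
  rewrite ltnn subnn coefC eqxx /= coefZ coefXn.
  by case: (v == j); rewrite ?mulr1 ?mulr0.
rewrite /=; case: ltnP => h; first by rewrite coef0.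
have hi : (i < u)%N by rewrite ltn_neqAle eq_sym ne h.
by rewrite coefC subn_eq0 leqNgt hi /= coef0.
Qed.

Lemma mono0 i j : mono (0 : K) i j = 0.
Proof. by rewrite /mono scale0r polyC0 mul0r. Qed.
Lemma monoD a b i j : mono (a + b) i j = mono a i j + mono b i j.
Proof. by rewrite /mono scalerDl polyCD mulrDl. Qed.
Lemma mono_mul a b i j p q : mono a i j * mono b p q = mono (a * b) (i + p) (j + q).
Proof.
rewrite /mono mulrACA -polyCM -exprD; congr (_ %:P * _).
by rewrite -scalerAl -scalerAr scalerA -exprD.
Qed.

Lemma opcoef_oob M u v : (leq (size M) u || leq (size M`_u) v) -> opcoef M u v = 0.
Proof.
rewrite /opcoef; case/orP => h; first by rewrite (nth_default _ h) coef0.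
by rewrite (nth_default _ h).
Qed.

Lemma ordn_ge M i j : opcoef M i j != 0 -> (i + j <= ordn M)%N.
Proof.
move=> nz.
have hi : (i < size M)%N.
  by rewrite ltnNge; apply: contra nz => h; rewrite opcoef_oob ?h.
have hj : leq j.+1 (size M`_i).
  by rewrite ltnNge; apply: contra nz => h; rewrite opcoef_oob ?h ?orbT.
rewrite /ordn; apply: leq_trans (leq_bigmax (Ordinal hi)).
exact: (@leq_bigmax_cond _ _ _ (Ordinal hj)).
Qed.

Lemma ordn_le M n : (forall i j, opcoef M i j != 0 -> (i + j <= n)%N) -> (ordn M <= n)%N.
Proof.
move=> H; apply/bigmax_leqP => i _; apply/bigmax_leqP => j nz; exact: H.
Qed.

Lemma ordn_eq M n i j : opcoef M i j != 0 -> (i + j = n)%N ->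
  (forall i j, opcoef M i j != 0 -> (i + j <= n)%N) -> ordn M = n.
Proof.
move=> nz e H; apply/eqP; rewrite eqn_leq ordn_le // -e; exact: ordn_ge.
Qed.

Lemma sum_delta (R : zmodType) n (P : pred nat) (F : nat -> R) (u : nat) :
  \sum_(i < n | P i) (if u == i then F i else 0) = if (u < n)%N && P u then F u else 0.
Proof.
case: ifP => [/andP[un Pu]|H].
  rewrite (bigD1 (Ordinal un)) //= eqxx big1 ?addr0 //.
  move=> i /andP[_ ne]; rewrite ifN //; apply: contra ne => /eqP e; apply/eqP/val_inj => /=; by rewrite e.
rewrite big1 // => i Pi; case: eqP => // e; subst u; move: H; by rewrite ltn_ord Pi.
Qed.

Arguments sum_delta {R}.

Lemma sum2_delta (R : zmodType) n (m : nat -> nat) (P : nat -> nat -> bool)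
   (F : nat -> nat -> R) (u v : nat) :
  \sum_(i < n) \sum_(j < m i | P i j) (if (u == i) && (v == j) then F i j else 0)
  = if (u < n)%N && ((v < m u)%N && P u v) then F u v else 0.
Proof.
transitivity (\sum_(i < n) (if u == i then
    \sum_(j < m i | P i j) (if v == j then F i j else 0) else 0)).
  apply: eq_bigr => i _; case: (u == i) => //=; by rewrite big1.
rewrite (sum_delta n xpredT (fun i => \sum_(j < m i | P i j) (if v == j then F i j else 0))).
rewrite andbT; case: (u < n)%N => //=.
exact: (sum_delta (m u) (P u) (F u)).
Qed.

Arguments sum2_delta {R}.

Lemma Sym_coef M u v : opcoef (Sym M) u v = if (u + v == ordn M)%N then opcoef M u v else 0.
Proof.
rewrite /Sym opcoef_sum.
under eq_bigr do rewrite opcoef_sum.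
under eq_bigr do under eq_bigr do rewrite opcoef_mono.
rewrite (sum2_delta (size M) (fun i => size M`_i) (fun i j => (i + j == ordn M)%N)
   (fun i j => opcoef M i j)).
case hu: (u < size M)%N; last by case: ifP => // _; rewrite opcoef_oob // leqNgt hu.
case hv: (leq v.+1 (size M`_u)); last by case: ifP => // _; rewrite opcoef_oob // (leqNgt (size M`_u)) hv orbT.
by [].
Qed.

End Gen.



Lemma widen_sum (R : zmodType) n B (F : nat -> R) : (n <= B)%N ->
  (forall i, (n <= i)%N -> F i = 0) -> \sum_(i < n) F i = \sum_(i < B) F i.
Proof.
move=> nB H; rewrite -(big_mkord xpredT F) -(big_mkord xpredT F).
rewrite [RHS](@big_cat_nat _ _ _ n 0 B _ _ (leq0n n) nB) /= [X in _ + X]big_nat_cond [X in _ + X]big1 ?addr0 //.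
by move=> i /andP[/andP[ni _] _]; exact: H.
Qed.

Section Mul.
Variable K : fieldType.
Variables dx dy : K -> K.
Hypothesis dxD : forall a b, dx (a + b) = dx a + dx b.
Hypothesis dyD : forall a b, dy (a + b) = dy a + dy b.
Implicit Types (M N : op K) (a b c : K).

Lemma dadd0 (d : K -> K) : (forall a b, d (a+b) = d a + d b) -> d 0 = 0.
Proof. by move=> h; apply: (addrI (d 0)); rewrite -h !addr0. Qed.

Lemma iter_add (d : K -> K) n a b : (forall a b, d (a+b) = d a + d b) ->
  iter n d (a + b) = iter n d a + iter n d b.
Proof. by move=> h; elim: n => //= n ->. Qed.

Lemma iter_0 (d : K -> K) n : (forall a b, d (a+b) = d a + d b) -> iter n d 0 = 0.
Proof. by move=> h; elim: n => //= n ->; exact: dadd0. Qed.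

Definition opm a b (i j p q : nat) : op K :=
  \sum_(k < i.+1) \sum_(l < j.+1)
     mono (a * 'C(i, k)%:R * 'C(j, l)%:R * iter (i - k) dx (iter (j - l) dy b))
          (k + p) (l + q).

Lemma opmul_opm M N : opmul dx dy M N =
  \sum_(i < size M) \sum_(j < size M`_i) \sum_(p < size N) \sum_(q < size N`_p)
    opm (opcoef M i j) (opcoef N p q) i j p q.
Proof. by []. Qed.

Lemma opm0l b i j p q : opm 0 b i j p q = 0.
Proof.
rewrite /opm big1 // => k _; rewrite big1 // => l _; by rewrite !mul0r mono0.
Qed.

Lemma opm0r a i j p q : opm a 0 i j p q = 0.
Proof.
rewrite /opm big1 // => k _; rewrite big1 // => l _.
by rewrite (iter_0 _ _ dyD) (iter_0 _ _ dxD) mulr0 mono0.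
Qed.

Lemma opmDl a1 a2 b i j p q : opm (a1 + a2) b i j p q = opm a1 b i j p q + opm a2 b i j p q.
Proof.
rewrite /opm -big_split; apply: eq_bigr => k _; rewrite -big_split; apply: eq_bigr => l _.
by rewrite !mulrDl monoD.
Qed.

Lemma opmDr a b1 b2 i j p q : opm a (b1 + b2) i j p q = opm a b1 i j p q + opm a b2 i j p q.
Proof.
rewrite /opm -big_split; apply: eq_bigr => k _; rewrite -big_split; apply: eq_bigr => l _.
by rewrite (iter_add _ _ _ _ dyD) (iter_add _ _ _ _ dxD) mulrDr monoD.
Qed.

Definition bnd M : nat := (size M + \max_(i < size M) size (M`_i)%R)%N.

Lemma bnd_size M : (size M <= bnd M)%N.
Proof. exact: leq_addr. Qed.

Lemma bnd_sizei M i : leq (size M`_i) (bnd M).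
Proof.
case: (ltnP i (size M)) => h.
  apply: leq_trans (leq_bigmax (F := fun i : 'I_(size M) => size M`_i) (Ordinal h)) _; exact: leq_addl.
by rewrite (nth_default _ h) size_poly0.
Qed.

Lemma sum2_widen M B (G : nat -> nat -> op K) : (bnd M <= B)%N ->
  (forall i j, opcoef M i j = 0 -> G i j = 0) ->
  \sum_(i < size M) \sum_(j < size M`_i) G i j = \sum_(i < B) \sum_(j < B) G i j.
Proof.
move=> hB hG.
rewrite (widen_sum _ (size M) B (fun i => \sum_(j < size M`_i) G i j)).
- apply: eq_bigr => i _; apply: widen_sum; first exact: leq_trans (bnd_sizei M i) hB.
  by move=> j hj; apply: hG; rewrite /opcoef nth_default.
- exact: leq_trans (bnd_size M) hB.
- by move=> i hi; rewrite nth_default // size_poly0 big_ord0.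
Qed.

Lemma opmulE M N B : (bnd M <= B)%N -> (bnd N <= B)%N ->
  opmul dx dy M N = \sum_(i < B) \sum_(j < B) \sum_(p < B) \sum_(q < B)
    opm (opcoef M i j) (opcoef N p q) i j p q.
Proof.
move=> hM hN; rewrite opmul_opm (sum2_widen M B (fun i j => \sum_(p < size N) \sum_(q < size N`_p)
    opm (opcoef M i j) (opcoef N p q) i j p q)) //.
  apply: eq_bigr => i _; apply: eq_bigr => j _.
  apply: (sum2_widen N B (fun p q => opm (opcoef M i j) (opcoef N p q) i j p q)) => // p q ->.
  exact: opm0r.
move=> i j ->; rewrite big1 // => p _; rewrite big1 // => q _; exact: opm0l.
Qed.


Lemma opmulDl M1 M2 N : opmul dx dy (M1 + M2) N = opmul dx dy M1 N + opmul dx dy M2 N.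
Proof.
set B := (bnd M1 + bnd M2 + bnd (M1 + M2)%R + bnd N)%N.
rewrite !(opmulE _ _ B); try (rewrite /B; lia).
rewrite -big_split; apply: eq_bigr => i _; rewrite -big_split; apply: eq_bigr => j _.
rewrite -big_split; apply: eq_bigr => p _; rewrite -big_split; apply: eq_bigr => q _.
by rewrite opcoefD opmDl.
Qed.

Lemma opmulDr M N1 N2 : opmul dx dy M (N1 + N2) = opmul dx dy M N1 + opmul dx dy M N2.
Proof.
set B := (bnd M + bnd N1 + bnd N2 + bnd (N1 + N2)%R)%N.
rewrite !(opmulE _ _ B); try (rewrite /B; lia).
rewrite -big_split; apply: eq_bigr => i _; rewrite -big_split; apply: eq_bigr => j _.
rewrite -big_split; apply: eq_bigr => p _; rewrite -big_split; apply: eq_bigr => q _.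
by rewrite opcoefD opmDr.
Qed.

Lemma opmul_mono a b i j p q : opmul dx dy (mono a i j) (mono b p q) = opm a b i j p q.
Proof.
set B := (bnd (mono a i j) + bnd (mono b p q) + i + j + p + q + 1)%N.
rewrite (opmulE _ _ B); try (rewrite /B; lia).
transitivity (\sum_(i' < B) \sum_(j' < B | true) if (i == i') && (j == j') then
  \sum_(p' < B) \sum_(q' < B | true) (if (p == p') && (q == q') then opm a b i' j' p' q' else 0)
  else 0).
  apply: eq_bigr => i' _; apply: eq_bigr => j' _; rewrite opcoef_mono (eq_sym (i' : nat)) (eq_sym (j' : nat)).
  case: ifP => _; last by rewrite big1 // => p' _; rewrite big1 // => q' _; rewrite opm0l.
  apply: eq_bigr => p' _; apply: eq_bigr => q' _; rewrite opcoef_mono (eq_sym (p' : nat)) (eq_sym (q' : nat)).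
  by case: ifP => // _; rewrite opm0r.
rewrite (sum2_delta _ B (fun _ => B) (fun _ _ => true) (fun i' j' =>
  \sum_(p' < B) \sum_(q' < B | true) (if (p == p') && (q == q') then opm a b i' j' p' q' else 0))).
rewrite (sum2_delta _ B (fun _ => B) (fun _ _ => true) (fun p' q' => opm a b i j p' q')).
have -> : (i < B)%N by rewrite /B; lia.
have -> : (j < B)%N by rewrite /B; lia.
have -> : (p < B)%N by rewrite /B; lia.
by have -> : (q < B)%N by rewrite /B; lia.
Qed.

Lemma opm00 a b p q : opm a b 0 0 p q = mono (a * b) p q.
Proof. by rewrite /opm !big_ord1 /= !mulr1. Qed.

Lemma opm10 a b p q : opm a b 1 0 p q = mono (a * dx b) p q + mono (a * b) p.+1 q.
Proof. by rewrite /opm big_ord_recr /= !big_ord1 /= !mulr1. Qed.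

Lemma opm01 a b p q : opm a b 0 1 p q = mono (a * dy b) p q + mono (a * b) p q.+1.
Proof. by rewrite /opm !big_ord1 big_ord_recr /= big_ord1 /= !mulr1 !add0n add1n. Qed.

End Mul.



Section Shape.
Variable K : fieldType.
Implicit Types (M N F S : op K) (a b c : K).

Lemma pXE : pX K = mono 1 1 0. Proof. by []. Qed.
Lemma pYE : pY K = mono 1 0 1. Proof. by []. Qed.
Lemma SymL1E : pX K * pY K * (pX K + pY K) = mono 1 2 1 + mono 1 1 2.
Proof. by rewrite /pX /pY !mono_mul mulrDr !mono_mul !mulr1. Qed.
Lemma SymL2E : pX K ^+ 2 * pY K = mono 1 2 1.
Proof. by rewrite /pX /pY expr2 !mono_mul !mulr1. Qed.
Lemma S2aE : pY K * pX K + pY K * pY K = mono 1 1 1 + mono 1 0 2.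
Proof. by rewrite /pX /pY !mono_mul !mulr1. Qed.
Lemma S2bE : pX K * pX K = mono 1 2 0.
Proof. by rewrite /pX /pY !mono_mul !mulr1. Qed.

Lemma coef_fromSym F S u v : Sym F = S -> (ordn F <= u + v)%N ->
  opcoef F u v = if (u + v == ordn F)%N then opcoef S u v else 0.
Proof.
move=> <- h; rewrite Sym_coef; case: eqP => // ne.
apply/eqP; apply: contraT => nz; have := ordn_ge _ _ _ _ nz; lia.
Qed.

Lemma ordn_fromSym F S u v : Sym F = S -> opcoef S u v != 0 -> ordn F = (u + v)%N.
Proof.
move=> <-; rewrite Sym_coef; case: (eqVneq (u + v)%N (ordn F)) => [-> //|ne]; by rewrite eqxx.
Qed.

Lemma shapeX F : Sym F = pX K -> F = mono 1 1 0 + mono (opcoef F 0 0) 0 0.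
Proof.
move=> H; have ho : ordn F = 1%N by rewrite (ordn_fromSym _ _ 1 0 H) // pXE opcoef_mono oner_eq0.
apply: op_eq => u v; rewrite opcoefD !opcoef_mono.
case: u => [|[|u]]; case: v => [|[|v]] /=; rewrite ?addr0 ?add0r //;
  rewrite (coef_fromSym _ _ _ _ H) ho ?pXE ?opcoef_mono ?addSn ?addnS //=; lia.
Qed.

Lemma shapeY F : Sym F = pY K -> F = mono 1 0 1 + mono (opcoef F 0 0) 0 0.
Proof.
move=> H; have ho : ordn F = 1%N by rewrite (ordn_fromSym _ _ 0 1 H) // pYE opcoef_mono oner_eq0.
apply: op_eq => u v; rewrite opcoefD !opcoef_mono.
case: u => [|[|u]]; case: v => [|[|v]] /=; rewrite ?addr0 ?add0r //;
  rewrite (coef_fromSym _ _ _ _ H) ho ?pYE ?opcoef_mono ?addSn ?addnS //=; lia.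
Qed.


Lemma shapeS2a F : Sym F = pY K * pX K + pY K * pY K ->
  F = mono 1 1 1 + mono 1 0 2 + mono (opcoef F 1 0) 1 0 + mono (opcoef F 0 1) 0 1
      + mono (opcoef F 0 0) 0 0.
Proof.
rewrite S2aE => H.
have ho : ordn F = 2%N by rewrite (ordn_fromSym _ _ 1 1 H) // !opcoefD !opcoef_mono /= addr0 oner_eq0.
apply: op_eq => u v; rewrite !opcoefD !opcoef_mono.
case: u => [|[|[|u]]]; case: v => [|[|[|v]]] /=; rewrite ?addr0 ?add0r //;
  rewrite (coef_fromSym _ _ _ _ H) ho ?opcoefD ?opcoef_mono ?addSn ?addnS //= ?addr0 ?add0r //; lia.
Qed.

Lemma shapeS2b F : Sym F = pX K * pX K ->
  F = mono 1 2 0 + mono (opcoef F 1 0) 1 0 + mono (opcoef F 0 1) 0 1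
      + mono (opcoef F 0 0) 0 0.
Proof.
rewrite S2bE => H.
have ho : ordn F = 2%N by rewrite (ordn_fromSym _ _ 2 0 H) // !opcoef_mono /= oner_eq0.
apply: op_eq => u v; rewrite !opcoefD !opcoef_mono.
case: u => [|[|[|u]]]; case: v => [|[|[|v]]] /=; rewrite ?addr0 ?add0r //;
  rewrite (coef_fromSym _ _ _ _ H) ho ?opcoefD ?opcoef_mono ?addSn ?addnS //= ?addr0 ?add0r //; lia.
Qed.


Ltac simpc := rewrite ?opcoefD ?opcoefN ?opcoef_mono /= ?addr0 ?add0r ?subr0 ?sub0r.

Lemma SymX c : Sym (mono 1 1 0 + mono c 0 0) = pX K.
Proof.
have ho : ordn (mono 1 1 0 + mono c 0 0) = 1%N.
  apply: (ordn_eq _ _ 1 1 0 _ erefl); first by simpc; rewrite oner_eq0.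
  move=> i j; simpc; case: i => [|[|i]]; case: j => [|[|j]]; simpc; rewrite ?eqxx //.
apply: op_eq => u v; rewrite Sym_coef ho pXE.
case: u => [|[|[|u]]]; case: v => [|[|[|v]]]; simpc; rewrite ?addSn ?addnS //.
Qed.

Lemma SymY c : Sym (mono 1 0 1 + mono c 0 0) = pY K.
Proof.
have ho : ordn (mono 1 0 1 + mono c 0 0) = 1%N.
  apply: (ordn_eq _ _ 1 0 1 _ erefl); first by simpc; rewrite oner_eq0.
  move=> i j; simpc; case: i => [|[|i]]; case: j => [|[|j]]; simpc; rewrite ?eqxx //.
apply: op_eq => u v; rewrite Sym_coef ho pYE.
case: u => [|[|[|u]]]; case: v => [|[|[|v]]]; simpc; rewrite ?addSn ?addnS //.
Qed.

Lemma SymS2a c10 c01 c00 :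
  Sym (mono 1 1 1 + mono 1 0 2 + mono c10 1 0 + mono c01 0 1 + mono c00 0 0)
  = pY K * pX K + pY K * pY K.
Proof.
set F := (X in Sym X).
have ho : ordn F = 2%N.
  apply: (ordn_eq _ _ 2 1 1 _ erefl); first by rewrite /F; simpc; rewrite oner_eq0.
  move=> i j; rewrite /F; simpc; case: i => [|[|[|i]]]; case: j => [|[|[|j]]]; simpc; rewrite ?eqxx //.
apply: op_eq => u v; rewrite Sym_coef ho S2aE /F.
case: u => [|[|[|u]]]; case: v => [|[|[|v]]]; simpc; rewrite ?addSn ?addnS //.
Qed.

Lemma SymS2b c10 c01 c00 :
  Sym (mono 1 2 0 + mono c10 1 0 + mono c01 0 1 + mono c00 0 0) = pX K * pX K.
Proof.
set F := (X in Sym X).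
have ho : ordn F = 2%N.
  apply: (ordn_eq _ _ 2 2 0 _ erefl); first by rewrite /F; simpc; rewrite oner_eq0.
  move=> i j; rewrite /F; simpc; case: i => [|[|[|i]]]; case: j => [|[|[|j]]]; simpc; rewrite ?eqxx //.
apply: op_eq => u v; rewrite Sym_coef ho S2bE /F.
case: u => [|[|[|u]]]; case: v => [|[|[|v]]]; simpc; rewrite ?addSn ?addnS //.
Qed.

End Shape.



Section Der.
Variable K : fieldType.
Variable d : K -> K.
Hypothesis hd : is_derivation d.

Lemma derD a b : d (a + b) = d a + d b. Proof. exact: hd.1. Qed.
Lemma derM a b : d (a * b) = d a * b + a * d b. Proof. exact: hd.2. Qed.
Lemma der0 : d 0 = 0. Proof. exact: (dadd0 _ _ derD). Qed.
Lemma derN a : d (- a) = - d a.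
Proof. apply: (addrI (d a)); by rewrite -derD !subrr der0. Qed.
Lemma derB a b : d (a - b) = d a - d b. Proof. by rewrite derD derN. Qed.
Lemma der1 : d 1 = 0.
Proof. have := derM 1 1; rewrite !mulr1 mul1r => h.
by apply: (addIr (d 1)); rewrite add0r -h. Qed.
End Der.

Lemma eq_by (K : fieldType) (x y X Y : K) : X = Y -> x = X -> Y = y -> x = y.
Proof. by move=> e -> <-. Qed.

Lemma ord_crit (K : fieldType) (R R' : op K) : (ordn R <= 1)%N ->
  ((forall u v, (0 < u + v)%N -> opcoef R' u v = 0) -> R = R') -> ord_le (ord R) (ord R').
Proof.
move=> hR H.
have refl : forall o, ord_le o o by case=> //= n.
rewrite /ord; have [z|nz] := eqVneq R' 0.
  have e : R = R' by apply: H => u v _; rewrite z opcoef0.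
  by rewrite e z eqxx.
have [h|h] := leqP (ordn R') 0.
  have e : R = R'.
    apply: H => u v huv; apply/eqP; apply: contraT => nzc.
    have := ordn_ge _ _ _ _ nzc; lia.
  by rewrite e (negbTE nz) /=.
by case: (R == 0) => //=; lia.
Qed.



Ltac simpc := rewrite ?opcoefD ?opcoefN ?opcoef_mono /= ?addr0 ?add0r ?subr0 ?sub0r.

Opaque mono opcoef.
Section P1.
Variable K : fieldType.
Variables dx dy : K -> K.
Hypothesis hdx : is_derivation dx.
Hypothesis hdy : is_derivation dy.

Let dxD := derD _ _ hdx.
Let dyD := derD _ _ hdy.

Ltac dsimp := rewrite ?(derB _ _ hdx, derM _ _ hdx, der1 _ _ hdx, derD _ _ hdx,
  derN _ _ hdx, derB _ _ hdy, derM _ _ hdy, der1 _ _ hdy, derD _ _ hdy, derN _ _ hdy).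

Lemma part1 (a20 a11 a02 a10 a01 a00 : K) :
  (let SymL := pX K * pY K * (pX K + pY K) in
   let L := hat SymL + mono a20 2 0 + mono a11 1 1 + mono a02 0 2
            + mono a10 1 0 + mono a01 0 1 + mono a00 0 0 in
   common_obstacle dx dy (pX K) (pY K * pX K + pY K * pY K) L
     (mono (a02 ^+ 2 - a11 * a02 + a01 + dx (a02 - a11)) 0 1
      + mono (a00 - a02 * a10 + a02 ^+ 2 * a20 + 2 * a02 * dx a20 - dx a10
              + a20 * dx a02 + dx (dx a20)) 0 0)).
Proof.
move=> SymL L.
have hL : L = mono 1 2 1 + mono 1 1 2 + mono a20 2 0 + mono a11 1 1 + mono a02 0 2
            + mono a10 1 0 + mono a01 0 1 + mono a00 0 0 by rewrite /L /hat /SymL SymL1E.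
have EXP : forall c e10 e01 e00 : K, opmul dx dy (mono 1 1 0 + mono c 0 0)
    (mono 1 1 1 + mono 1 0 2 + mono e10 1 0 + mono e01 0 1 + mono e00 0 0) =
 mono (1 * dx 1) 1 1 + mono (1 * 1) 2 1 +
 (mono (1 * dx 1) 0 2 + mono (1 * 1) 1 2) +
 (mono (1 * dx e10) 1 0 + mono (1 * e10) 2 0) +
 (mono (1 * dx e01) 0 1 + mono (1 * e01) 1 1) +
 (mono (1 * dx e00) 0 0 + mono (1 * e00) 1 0) +
 (mono (c * 1) 1 1 + mono (c * 1) 0 2 +
  mono (c * e10) 1 0 + mono (c * e01) 0 1 +
  mono (c * e00) 0 0).
  move=> c e10 e01 e00.
  by rewrite !(opmulDl _ _ _ dxD dyD) !(opmulDr _ _ _ dxD dyD) !(opmul_mono _ _ _ dxD dyD) !opm10 !opm00.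
split.
  exists (mono 1 1 0 + mono a02 0 0), (mono 1 1 1 + mono 1 0 2 + mono a20 1 0
     + mono (a11 - a02) 0 1 + mono (a10 - dx a20 - a02 * a20) 0 0).
  split; last split.
  2: exact: (SymX K a02).
  2: exact: (SymS2a K a20 (a11 - a02) (a10 - dx a20 - a02 * a20)).
  rewrite hL EXP; apply: op_eq => u v.
  rewrite !(opcoefN, opcoefD) !opcoef_mono.
  by case: u => [|[|[|[|u]]]]; case: v => [|[|[|[|v]]]] => /=; dsimp; ring.
move=> R' [G1 [G2 [E [S1 S2]]]].
rewrite (shapeX _ _ S1) (shapeS2a _ _ S2) in E.
move: (opcoef G1 0 0) (opcoef G2 1 0) (opcoef G2 0 1) (opcoef G2 0 0) E => c e10 e01 e00 E.
rewrite hL EXP in E.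
apply: ord_crit.
  apply: ordn_le => i j; rewrite !opcoefD !opcoef_mono.
  by case: i => [|[|i]]; case: j => [|[|j]] => //=; rewrite ?addr0 ?eqxx.
move=> h0.
have e : forall u v, opcoef (L - R') u v = opcoef (mono 1 2 1 + mono 1 1 2 + mono a20 2 0 + mono a11 1 1 + mono a02 0 2
            + mono a10 1 0 + mono a01 0 1 + mono a00 0 0 - R') u v by move=> u v; rewrite hL.
have E20 := congr1 (fun M => opcoef M 2 0) E.
have E11 := congr1 (fun M => opcoef M 1 1) E.
have E02 := congr1 (fun M => opcoef M 0 2) E.
have E10 := congr1 (fun M => opcoef M 1 0) E.
have E01 := congr1 (fun M => opcoef M 0 1) E.
have E00 := congr1 (fun M => opcoef M 0 0) E.
move: E20 E11 E02 E10 E01 E00; rewrite /= !(opcoefN, opcoefD) !opcoef_mono /=.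
rewrite (h0 2%N 0%N) // (h0 1%N 1%N) // (h0 0%N 2%N) // (h0 1%N 0%N) // (h0 0%N 1%N) //.
move=> E20 E11 E02 E10 E01 E00.
have h20 : a20 = e10 by apply: (eq_by _ _ _ _ _ E20); dsimp; ring.
have h02 : a02 = c by apply: (eq_by _ _ _ _ _ E02); dsimp; ring.
have h11 : a11 = e01 + c by apply: (eq_by _ _ _ _ _ E11); dsimp; ring.
have h10 : a10 = dx e10 + e00 + c * e10 by apply: (eq_by _ _ _ _ _ E10); dsimp; ring.
have h01 : a01 = dx e01 + c * e01 by apply: (eq_by _ _ _ _ _ E01); dsimp; ring.
have h00' : a00 - opcoef R' 0 0 = dx e00 + c * e00 by apply: (eq_by _ _ _ _ _ E00); dsimp; ring.
have h00 : opcoef R' 0 0 = a00 - (dx e00 + c * e00) by rewrite -h00'; ring.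
apply: op_eq => u v; rewrite !opcoefD !opcoef_mono.
case: u => [|[|u]]; case: v => [|[|v]] => /=.
- rewrite h00 h20 h02 h10; dsimp; ring.
- rewrite (h0 0%N 1%N) // h02 h11 h01; dsimp; ring.
all: by rewrite h0; [ring|lia].
Qed.
End P1.




Section P2.
Variable K : fieldType.
Variables dx dy : K -> K.
Hypothesis hdx : is_derivation dx.
Hypothesis hdy : is_derivation dy.

Let dxD := derD _ _ hdx.
Let dyD := derD _ _ hdy.

Ltac dsimp := rewrite ?(derB _ _ hdx, derM _ _ hdx, der1 _ _ hdx, derD _ _ hdx,
  derN _ _ hdx, derB _ _ hdy, derM _ _ hdy, der1 _ _ hdy, derD _ _ hdy, derN _ _ hdy).

Lemma part2 (a20 a11 a02 a10 a01 a00 : K) :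
  (let SymL := pX K ^+ 2 * pY K in
   let L := hat SymL + mono a20 2 0 + mono a11 1 1 + mono a02 0 2
            + mono a10 1 0 + mono a01 0 1 + mono a00 0 0 in
   common_obstacle dx dy (pY K) (pX K * pX K) L
     (mono (a10 - a20 * a11 - dy a11) 1 0
      + mono (a00 - a20 * a01 + a20 ^+ 2 * a02 + 2 * a20 * dy a02 - dy a01
              + a02 * dy a20 + dy (dy a02)) 0 0)).
Proof.
move=> SymL L.
have hL : L = mono 1 2 1 + mono a20 2 0 + mono a11 1 1 + mono a02 0 2
            + mono a10 1 0 + mono a01 0 1 + mono a00 0 0 by rewrite /L /hat /SymL SymL2E.
have EXP : forall c e10 e01 e00 : K, opmul dx dy (mono 1 0 1 + mono c 0 0)
    (mono 1 2 0 + mono e10 1 0 + mono e01 0 1 + mono e00 0 0) =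
 mono (1 * dy 1) 2 0 + mono (1 * 1) 2 1 +
 (mono (1 * dy e10) 1 0 + mono (1 * e10) 1 1) +
 (mono (1 * dy e01) 0 1 + mono (1 * e01) 0 2) +
 (mono (1 * dy e00) 0 0 + mono (1 * e00) 0 1) +
 (mono (c * 1) 2 0 + mono (c * e10) 1 0 +
  mono (c * e01) 0 1 + mono (c * e00) 0 0).
  move=> c e10 e01 e00.
  by rewrite !(opmulDl _ _ _ dxD dyD) !(opmulDr _ _ _ dxD dyD) !(opmul_mono _ _ _ dxD dyD) !opm01 !opm00.
split.
  exists (mono 1 0 1 + mono a20 0 0), (mono 1 2 0 + mono a11 1 0
     + mono a02 0 1 + mono (a01 - dy a02 - a20 * a02) 0 0).
  split; last split.
  2: exact: (SymY K a20).
  2: exact: (SymS2b K a11 a02 (a01 - dy a02 - a20 * a02)).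
  rewrite hL EXP; apply: op_eq => u v.
  rewrite !(opcoefN, opcoefD) !opcoef_mono.
  by case: u => [|[|[|[|u]]]]; case: v => [|[|[|[|v]]]] => /=; dsimp; ring.
move=> R' [G1 [G2 [E [S1 S2]]]].
rewrite (shapeY _ _ S1) (shapeS2b _ _ S2) in E.
move: (opcoef G1 0 0) (opcoef G2 1 0) (opcoef G2 0 1) (opcoef G2 0 0) E => c e10 e01 e00 E.
rewrite hL EXP in E.
apply: ord_crit.
  apply: ordn_le => i j; rewrite !opcoefD !opcoef_mono.
  by case: i => [|[|i]]; case: j => [|[|j]] => //=; rewrite ?addr0 ?eqxx.
move=> h0.
have E20 := congr1 (fun M => opcoef M 2 0) E.
have E11 := congr1 (fun M => opcoef M 1 1) E.
have E02 := congr1 (fun M => opcoef M 0 2) E.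
have E10 := congr1 (fun M => opcoef M 1 0) E.
have E01 := congr1 (fun M => opcoef M 0 1) E.
have E00 := congr1 (fun M => opcoef M 0 0) E.
move: E20 E11 E02 E10 E01 E00; rewrite /= !(opcoefN, opcoefD) !opcoef_mono /=.
rewrite (h0 2%N 0%N) // (h0 1%N 1%N) // (h0 0%N 2%N) // (h0 1%N 0%N) // (h0 0%N 1%N) //.
move=> E20 E11 E02 E10 E01 E00.
have h20 : a20 = c by apply: (eq_by _ _ _ _ _ E20); dsimp; ring.
have h02 : a02 = e01 by apply: (eq_by _ _ _ _ _ E02); dsimp; ring.
have h11 : a11 = e10 by apply: (eq_by _ _ _ _ _ E11); dsimp; ring.
have h10 : a10 = dy e10 + c * e10 by apply: (eq_by _ _ _ _ _ E10); dsimp; ring.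
have h01 : a01 = dy e01 + e00 + c * e01 by apply: (eq_by _ _ _ _ _ E01); dsimp; ring.
have h00' : a00 - opcoef R' 0 0 = dy e00 + c * e00 by apply: (eq_by _ _ _ _ _ E00); dsimp; ring.
have h00 : opcoef R' 0 0 = a00 - (dy e00 + c * e00) by rewrite -h00'; ring.
apply: op_eq => u v; rewrite !opcoefD !opcoef_mono.
case: u => [|[|u]]; case: v => [|[|v]] => /=.
- rewrite h00 h20 h02 h01; dsimp; ring.
- by rewrite h0; [ring|lia].
- by rewrite h0; [ring|lia].
- rewrite (h0 1%N 0%N) // h20 h11 h10; dsimp; ring.
all: by rewrite h0; [ring|lia].
Qed.
End P2.

Theorem mainTheorem13 (K : fieldType) (dx dy : K -> K)
  (hdx : is_derivation dx) (hdy : is_derivation dy)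
  (hcomm : forall a, dx (dy a) = dy (dx a))
  (a20 a11 a02 a10 a01 a00 : K) :
  (let SymL := pX K * pY K * (pX K + pY K) in
   let L := hat SymL + mono a20 2 0 + mono a11 1 1 + mono a02 0 2
            + mono a10 1 0 + mono a01 0 1 + mono a00 0 0 in
   common_obstacle dx dy (pX K) (pY K * pX K + pY K * pY K) L
     (mono (a02 ^+ 2 - a11 * a02 + a01 + dx (a02 - a11)) 0 1
      + mono (a00 - a02 * a10 + a02 ^+ 2 * a20 + 2 * a02 * dx a20 - dx a10
              + a20 * dx a02 + dx (dx a20)) 0 0))
  /\
  (let SymL := pX K ^+ 2 * pY K in
   let L := hat SymL + mono a20 2 0 + mono a11 1 1 + mono a02 0 2
            + mono a10 1 0 + mono a01 0 1 + mono a00 0 0 in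
   common_obstacle dx dy (pY K) (pX K * pX K) L
     (mono (a10 - a20 * a11 - dy a11) 1 0
      + mono (a00 - a20 * a01 + a20 ^+ 2 * a02 + 2 * a20 * dy a02 - dy a01
              + a02 * dy a20 + dy (dy a02)) 0 0)).
Proof.
split; [exact: (part1 K dx dy hdx hdy) | exact: (part2 K dx dy hdx hdy)].
Qed.
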